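(* For a prime $p\ge 5$ the following statements are equivalent: (i) $p$ is a Wolstenholme prime, i.e. $\binom{2p}{p}\equiv 2\pmod{p^4}$; (ii) for all nonnegative integers $n$ and $m$, $\binom{np}{mp}\equiv\binom{n}{m}\pmod{p^4}$; (iii) for all nonnegative integers $n,m,n_0,m_0$ with $n_0<p$ and $m_0<p$, $$\binom{np^4+n_0}{mp^4+m_0}\equiv\binom{n}{m}\binom{n_0}{m_0}\pmod{p^4}.$$
   Context: A prime $p$ is called a Wolstenholme prime if $\binom{2p-1}{p-1}\equiv 1\pmod{p^4}$, equivalently $\binom{2p}{p}\equiv 2\pmod{p^4}$. Binomial coefficients use the conventions $\binom{0}{0}=1$ and $\binom{l}{r}=0$ if $l<r$. *)

(* Defs.v *)
From mathcomp Require Import all_boot.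
Set Implicit Arguments. Unset Strict Implicit. Unset Printing Implicit Defensive.

Definition wolstenholme_prime (p : nat) : Prop :=
  prime p /\ 'C(2 * p, p) = 2 %[mod p ^ 4].

(* Main.v *)
Require Import Defs.
From mathcomp Require Import all_boot all_algebra.
From mathcomp Require Import ring zify.
Import GRing.Theory.

Lemma fact_shift a b : (a + b)`! = a`! * \prod_(i < b) (a + i.+1).
Proof.
elim: b => [|b IH]; first by rewrite addn0 big_ord0 muln1.
by rewrite big_ord_recr /= addnS factS IH; ring.
Qed.

Definition Fnat (p n : nat) := \prod_(k < n) \prod_(i < p.-1) (k * p + i.+1).

Lemma factp p n : 0 < p -> (n * p)`! = p ^ n * n`! * Fnat p n.
Proof.
move=> p0; elim: n => [|n IH]; first by rewrite mul0n /Fnat big_ord0.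
rewrite mulSn addnC fact_shift IH /Fnat big_ord_recr /= factS expnS.
rewrite -(prednK p0) big_ord_recr /= prednK //.
have -> : n * p + p = p * n.+1 by rewrite mulnC mulnS addnC.
ring.
Qed.

Lemma binF p n m : 0 < p -> m <= n ->
  'C(n, m) * Fnat p n = 'C(n * p, m * p) * (Fnat p m * Fnat p (n - m)).
Proof.
move=> p0 mn.
have h1 := bin_fact mn.
have h2 : m * p <= n * p by rewrite leq_mul2r mn orbT.
have h3 := bin_fact h2.
rewrite -mulnBl !factp // in h3.
rewrite -h1 in h3.
have pos : 0 < p ^ n * (m`! * (n - m)`!) by rewrite muln_gt0 expn_gt0 p0 muln_gt0 !fact_gt0.
apply/eqP; rewrite -(eqn_pmul2l pos); apply/eqP.
have e : p ^ n = p ^ m * p ^ (n - m) by rewrite -expnD subnKC.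
move: h3; rewrite e => h3.
transitivity (p ^ m * p ^ (n - m) * ('C(n, m) * (m`! * (n - m)`!)) * Fnat p n); first ring.
rewrite -h3; ring.
Qed.
Local Open Scope ring_scope.
Lemma cubic (R : comPzRingType) (q : R) (I : Type) (f : I -> R) (hq : q ^+ 4 = 0) (s : seq I) :
  exists A b c d : R, forall y : R,
    \prod_(a <- s) (y * q + f a) = A + b * q * y + c * q ^+ 2 * y ^+ 2 + d * q ^+ 3 * y ^+ 3.
Proof.
elim: s => [|a s [A [b [c [d IH]]]]].
  exists 1, 0, 0, 0 => y; rewrite big_nil; ring.
exists (f a * A), (A + f a * b), (b + f a * c), (c + f a * d) => y.
rewrite big_cons IH.
have -> : (y * q + f a) * (A + b * q * y + c * q ^+ 2 * y ^+ 2 + d * q ^+ 3 * y ^+ 3)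
  = f a * A + (A + f a * b) * q * y + (b + f a * c) * q ^+ 2 * y ^+ 2 + (c + f a * d) * q ^+ 3 * y ^+ 3
    + d * q ^+ 4 * y ^+ 4 by ring.
by rewrite hq mulr0 mul0r addr0.
Qed.

Lemma sym_cubic (R : comUnitRingType) (q : R) (G : R -> R) (A b c d : R)
  (hG : forall y, G y = A + b * q * y + c * q ^+ 2 * y ^+ 2 + d * q ^+ 3 * y ^+ 3)
  (hs : forall y, G (-1 - y) = G y) (h6 : (6%:R : R) \is a GRing.unit) :
  forall y, G y = A + c * q ^+ 2 * (y * (y + 1)).
Proof.
have e1 := hs 0; have e2 := hs 1.
rewrite !hG in e1 e2.
have H1 : c * q ^+ 2 - (b * q + d * q ^+ 3) = (A + b * q * (-1 - 0) + c * q ^+ 2 * (-1 - 0) ^+ 2 + d * q ^+ 3 * (-1 - 0) ^+ 3) - (A + b * q * 0 + c * q ^+ 2 * 0 ^+ 2 + d * q ^+ 3 * 0 ^+ 3) by ring.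
rewrite e1 subrr in H1; move/eqP: H1; rewrite subr_eq0 => /eqP E1.
have H2 : 6%:R * (d * q ^+ 3) = (c * q ^+ 2 - (b * q + d * q ^+ 3)) *+ 3 - ((A + b * q * (-1 - 1) + c * q ^+ 2 * (-1 - 1) ^+ 2 + d * q ^+ 3 * (-1 - 1) ^+ 3) - (A + b * q * 1 + c * q ^+ 2 * 1 ^+ 2 + d * q ^+ 3 * 1 ^+ 3)) by ring.
rewrite e2 subrr subr0 E1 subrr mul0rn in H2.
have D0 : d * q ^+ 3 = 0 by apply: (mulrI h6); rewrite H2 mulr0.
move=> y; rewrite hG D0 E1 D0 addr0; ring.
Qed.
Lemma sgn_even (R : pzRingType) (n : nat) : (1 < n)%N -> odd n -> (-1) ^+ n.-1 = 1 :> R.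
Proof. move=> h1 o; rewrite -signr_odd; case: n h1 o => // n _ /= o.
 have -> : odd n = false by move: o; case: (odd n). by []. Qed.

Definition G (p : nat) (y : 'Z_(p ^ 4)) : 'Z_(p ^ 4) :=
  \prod_(i < p.-1) (y * p%:R + (i.+1)%:R).

Lemma G_sym (p : nat) (hp : (1 < p)%N) (op : odd p) (y : 'Z_(p ^ 4)) : G p (-1 - y) = G p y.
Proof.
rewrite /G [RHS](reindex_inj rev_ord_inj) /=.
have -> : \prod_(i < p.-1) ((-1 - y) * p%:R + (i.+1)%:R)
   = \prod_(i < p.-1) - (y * p%:R + ((rev_ord i).+1)%:R).
  apply: eq_bigr => i _.
  have hi := ltn_ord i.
  have -> : ((rev_ord i).+1 = p - i.+1)%N by rewrite /=; lia.
  rewrite natrB; last by lia.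
  ring.
by rewrite prodrN card_ord sgn_even // mul1r.
Qed.
Lemma nil2 (R : comPzRingType) (b u v : R) : b * b = 0 -> (1 + b * u) * (1 + b * v) = 1 + b * (u + v).
Proof. move=> hb; transitivity (1 + b * (u + v) + b * b * u * v); first ring. by rewrite hb !mul0r addr0. Qed.

Lemma p4gt1 {p} : (1 < p)%N -> (1 < p ^ 4)%N.
Proof. move=> h; rewrite -(exp1n 4); by rewrite ltn_exp2r. Qed.

Lemma Zeq p (h : (1 < p)%N) a b : (a%:R : 'Z_(p ^ 4)) = b%:R <-> a = b %[mod p ^ 4].
Proof.
have h4 := p4gt1 h.
split => [e | e]; first by have := congr1 (@nat_of_ord _) e; rewrite !val_Zp_nat.
by apply: val_inj; rewrite /= !val_Zp_nat.
Qed.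

Lemma Z0 p (h : (1 < p)%N) x : (p ^ 4 %| x)%N -> (x%:R : 'Z_(p ^ 4)) = 0.
Proof.
move=> d; have h4 := p4gt1 h.
apply: val_inj; rewrite /= val_Zp_nat //; apply/eqP; exact: d.
Qed.

Lemma pi4 p (h : (1 < p)%N) : (p%:R : 'Z_(p ^ 4)) ^+ 4 = 0.
Proof. by rewrite -natrX Z0. Qed.

Lemma unitZ p (hp : prime p) x : ~~ (p %| x)%N -> (x%:R : 'Z_(p ^ 4)) \is a GRing.unit.
Proof.
move=> nd; rewrite unitZpE; last exact: p4gt1 (prime_gt1 hp).
by rewrite coprimeXl // prime_coprime.
Qed.

Lemma not_dvd_small p x : (0 < x < p)%N -> ~~ (p %| x)%N.
Proof. move=> /andP[h0 h1]; apply/negP => /dvdn_leq => /(_ h0); lia. Qed.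

Lemma G0unit p (hp : prime p) : G p 0 \is a GRing.unit.
Proof.
rewrite /G unitr_prod // => i _; rewrite mul0r add0r unitZ //.
apply: not_dvd_small; have := ltn_ord i; lia.
Qed.

Lemma G_form p (hp : prime p) (hp5 : (5 <= p)%N) :
  exists g : 'Z_(p ^ 4), forall y, G p y = G p 0 * (1 + (p%:R) ^+ 2 * g * (y * (y + 1))).
Proof.
have p1 := prime_gt1 hp.
have [A [b [c [d hG]]]] := @cubic _ _ _ (fun i : 'I_p.-1 => (i.+1)%:R : 'Z_(p ^ 4)) (pi4 _ p1) (index_enum _).
have h6 : (6%:R : 'Z_(p ^ 4)) \is a GRing.unit.
  apply: unitZ => //; apply/negP => d6.
  have := dvdn_leq _ d6; move=> /(_ isT) => h.
  have : p = 5%N \/ p = 6%N by lia.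
  by case => e; move: d6 hp; rewrite e.
have op : odd p.
  case e: (odd p) => //; have : (2 %| p)%N by rewrite dvdn2 e.
  by rewrite dvdn_prime2 //; lia.
have hG' : forall y, G p y = A + b * p%:R * y + c * p%:R ^+ 2 * y ^+ 2 + d * p%:R ^+ 3 * y ^+ 3 by exact: hG.
have := @sym_cubic _ _ (G p) _ _ _ _ hG' (G_sym p p1 op) h6.
move=> H.
have HA : G p 0 = A by rewrite H mul0r mulr0 addr0.
have hAu : A \is a GRing.unit by rewrite -HA G0unit.
exists (c / A) => y; rewrite H HA.
by rewrite -[in LHS](divrK hAu c); ring.
Qed.

Definition S (n : nat) := (\sum_(k < n) k * k.+1)%N.

Lemma S_add m r : S (m + r) = (S m + S r + m * r * (m + r))%N.
Proof.
rewrite /S; elim: r => [|r IH]; first by rewrite addn0 big_ord0 !muln0 !addn0.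
rewrite addnS !big_ord_recr /= IH; ring.
Qed.

Definition F p n : 'Z_(p ^ 4) := \prod_(k < n) G p k%:R.

Lemma Fnat_cast p n : (Fnat p n)%:R = F p n.
Proof.
rewrite /Fnat /F /G natr_prod; apply: eq_bigr => k _.
rewrite natr_prod; apply: eq_bigr => i _; by rewrite natrD natrM.
Qed.

Lemma star p (hp : prime p) (hp5 : (5 <= p)%N) :
  exists b : 'Z_(p ^ 4), [/\ b * b = 0, (forall x, b * (p ^ 2 * x)%:R = 0) &
     forall n m, (m <= n)%N -> 'C(n * p, m * p)%:R = 'C(n, m)%:R * (1 + b * (n * m * (n - m))%:R)].
Proof.
have p1 := prime_gt1 hp.
have [g hg] := G_form p hp hp5.
set A := G p 0 in hg.
have hAu : A \is a GRing.unit by exact: G0unit p hp.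
set b := p%:R ^+ 2 * g.
have bb : b * b = 0.
  transitivity (p%:R ^+ 4 * (g * g) : 'Z_(p ^ 4)); first by rewrite /b; ring.
  by rewrite pi4 // mul0r.
have bx : forall x, b * (p ^ 2 * x)%:R = 0.
  move=> x; rewrite natrM natrX.
  transitivity (p%:R ^+ 4 * (g * x%:R) : 'Z_(p ^ 4)); first by rewrite /b; ring.
  by rewrite pi4 // mul0r.
have FF : forall n, F p n = A ^+ n * (1 + b * (S n)%:R).
  elim => [|n IH]; first by rewrite /F big_ord0 /S big_ord0 expr0 mulr0 addr0 mulr1.
  rewrite /F big_ord_recr /= -/(F p n) IH hg -/b exprS.
  rewrite /S big_ord_recr /= -/(S n) natrD.
  have -> : (n%:R * (n%:R + 1) : 'Z_(p ^ 4)) = (n * n.+1)%:R by rewrite natrM natr1.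
  transitivity (A * A ^+ n * ((1 + b * (S n)%:R) * (1 + b * (n * n.+1)%:R))); first ring.
  by rewrite nil2 // mulrDr.
exists b; split => // n m mn.
have e := binF p n m (prime_gt0 hp) mn.
move/(congr1 (fun x => x%:R : 'Z_(p ^ 4))): e; rewrite !natrM !Fnat_cast !FF.
have -> : n = (m + (n - m))%N by rewrite subnKC.
rewrite addKn S_add exprD.
set u := (S m)%:R; set v := (S (n - m))%:R; set X := (_ * _ * _)%N.
rewrite !natrD -/u -/v.
move=> e.
have e2 : A ^+ m * A ^+ (n - m) * ('C(m + (n - m), m)%:R * (1 + b * (u + v + X%:R))) =
          A ^+ m * A ^+ (n - m) * ('C((m + (n - m)) * p, m * p)%:R * ((1 + b * u) * (1 + b * v))).
  transitivity ('C(m + (n - m), m)%:R * (A ^+ m * A ^+ (n - m) * (1 + b * (u + v + X%:R)))); first ring.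
  rewrite e; ring.
have hu : A ^+ m * A ^+ (n - m) \is a GRing.unit by rewrite unitrM !unitrX.
move/(mulrI hu): e2; rewrite nil2 // => e2.
have hX : X%:R = ((m%:R + (n - m)%:R) * m%:R * (n - m)%:R : 'Z_(p ^ 4)).
  by rewrite /X !natrM natrD; ring.
rewrite -hX.
transitivity ('C((m + (n - m)) * p, m * p)%:R * ((1 + b * (u + v)) * (1 + b * (- (u + v))))).
  by rewrite nil2 // addrN mulr0 addr0 mulr1.
rewrite mulrA -e2 -mulrA nil2 //.
have -> : u + v + X%:R + - (u + v) = X%:R by ring.
by [].
Qed.
Lemma divbin p (hp : prime p) N j : (p ^ 4 %| N)%N -> ~~ (p %| j)%N -> (p ^ 4 %| 'C(N, j))%N.
Proof.
move=> dN nj.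
case: j nj => [|j] nj; first by rewrite dvdn0 in nj.
rewrite -(Gauss_dvdr _ (coprimeXl 4 (_ : coprime p j.+1))); last by rewrite prime_coprime.
by rewrite -mul_bin_diag dvdn_mulr.
Qed.

Lemma lucas p (hp : prime p) n m n0 m0 : (n0 < p)%N -> (m0 < p)%N ->
  ('C(n * p ^ 4 + n0, m * p ^ 4 + m0))%:R = 'C(n * p ^ 4, m * p ^ 4)%:R * 'C(n0, m0)%:R :> 'Z_(p ^ 4).
Proof.
move=> hn0 hm0.
have p1 := prime_gt1 hp.
set N := (n * p ^ 4)%N; set M := (m * p ^ 4)%N.
have pM : (p %| M)%N by rewrite /M dvdn_mull // dvdn_exp.
have hM : (M < (M + m0).+1)%N by lia.
rewrite -binomial.Vandermonde natr_sum (bigD1 (Ordinal hM)) //= addKn natrM big1 ?addr0 // => j hj.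
have hj' : (nat_of_ord j <> M) by move=> e; move: hj; rewrite -val_eqE /= e eqxx.
have hjle := ltn_ord j; rewrite ltnS in hjle.
case: (leqP (M + m0 - j) n0) => h; last by rewrite (bin_small h) muln0.
have pj0 : ~~ (p %| j)%N.
  apply/negP => pj.
  case: (leqP j M) => jM.
    have : (p %| M - j)%N by rewrite dvdn_sub.
    move/dvdn_leq; lia.
  have : (p %| j - M)%N by rewrite dvdn_sub.
  move/dvdn_leq; lia.
by rewrite natrM (Z0 _ p1 _ (divbin p hp N j (dvdn_mull _ (dvdnn _)) pj0)) mul0r.
Qed.
Local Close Scope ring_scope.
Theorem mainTheorem3 (p : nat) (hp : prime p) (hp5 : 5 <= p) :
  (wolstenholme_prime p <->
     (forall n m : nat, 'C(n * p, m * p) = 'C(n, m) %[mod p ^ 4]))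
  /\
  ((forall n m : nat, 'C(n * p, m * p) = 'C(n, m) %[mod p ^ 4]) <->
     (forall n m n0 m0 : nat, n0 < p -> m0 < p ->
        'C(n * p ^ 4 + n0, m * p ^ 4 + m0) = 'C(n, m) * 'C(n0, m0) %[mod p ^ 4])).
Proof.
have [b [bb bx st]] := star p hp hp5.
have p1 := prime_gt1 hp.
have u2 : ((2%:R : 'Z_(p ^ 4)) \is a GRing.unit)%R by apply: unitZ => //; apply: not_dvd_small; lia.
have hW : 'C(2 * p, p) = 2 %[mod p ^ 4] <-> (b = 0)%R.
  have e := st 2 1 isT; rewrite mul1n bin1 (_ : (2 * 1 * (2 - 1)) = 2) // in e.
  split.
    move/(Zeq _ p1); rewrite e => h.
    have h' : (2%:R * (2%:R * b) = 2%:R * (1 + b * 2%:R) - 2%:R :> 'Z_(p ^ 4))%R by ring.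
    rewrite h GRing.subrr in h'.
    by apply: (mulrI u2); apply: (mulrI u2); rewrite h' !GRing.mulr0.
  move=> b0; apply/(Zeq _ p1); by rewrite e b0 GRing.mul0r GRing.addr0 GRing.mulr1.
have P2of : (b = 0)%R -> forall n m, 'C(n * p, m * p) = 'C(n, m) %[mod p ^ 4].
  move=> b0 n m; apply/(Zeq _ p1); case: (leqP m n) => mn.
    by rewrite st // b0 GRing.mul0r GRing.addr0 GRing.mulr1.
  by rewrite !bin_small // ltn_pmul2r // prime_gt0.
have iter : (b = 0)%R -> forall j n m, ('C(n * p ^ j, m * p ^ j)%:R = 'C(n, m)%:R :> 'Z_(p ^ 4))%R.
  move=> b0; elim => [|j IH] n m; first by rewrite expn0 !muln1.
  by rewrite [p ^ j.+1]expnSr !mulnA; move/(Zeq _ p1): (P2of b0 (n * p ^ j) (m * p ^ j)) => ->.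
have chain : forall k, ('C(2 * p ^ k.+2, 1 * p ^ k.+2)%:R = 'C(2 * p ^ k.+1, 1 * p ^ k.+1)%:R :> 'Z_(p ^ 4))%R.
  move=> k; rewrite [p ^ k.+2]expnSr !mulnA st; last by lia.
  have -> : (2 * p ^ k.+1 * (1 * p ^ k.+1) * (2 * p ^ k.+1 - 1 * p ^ k.+1) = p ^ 2 * (2 * p ^ k * p ^ k * p ^ k.+1))%N.
    have -> : (2 * p ^ k.+1 - 1 * p ^ k.+1 = p ^ k.+1)%N by lia.
    rewrite !expnS; ring.
  by rewrite bx GRing.addr0 GRing.mulr1.
have P3W : (forall n m n0 m0 : nat, n0 < p -> m0 < p ->
        'C(n * p ^ 4 + n0, m * p ^ 4 + m0) = 'C(n, m) * 'C(n0, m0) %[mod p ^ 4]) ->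
        'C(2 * p, p) = 2 %[mod p ^ 4].
  move=> h3; have := h3 2 1 0 0 (prime_gt0 hp) (prime_gt0 hp); rewrite !addn0 bin1 bin0 muln1.
  move/(Zeq _ p1); rewrite chain chain chain expn1 mul1n => h.
  by apply/(Zeq _ p1).
split.
  split; first by move=> [_ W]; apply: P2of; apply/hW.
  by move=> h2; split => //; have := h2 2 1; rewrite mul1n bin1.
split.
  move=> h2; have b0 : (b = 0)%R by apply/hW; have := h2 2 1; rewrite mul1n bin1.
  move=> n m n0 m0 hn hm; apply/(Zeq _ p1); by rewrite lucas // iter // GRing.natrM.
by move=> h3; apply: P2of; apply/hW; exact: P3W h3.
Qed.
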